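(* Let $K$ be a field (of arbitrary characteristic), $0\ne q\in K$, $\phi$ the $K$-algebra endomorphism of $K[x]$ with $\phi(x)=qx$, and $\delta=\mathrm{id}-\phi$. Then: 1) if $q=1$, then $\operatorname{Im}\delta=0$; 2) if $q$ is not a root of unity in $K$, then $\operatorname{Im}\delta=xK[x]$; 3) if $q$ is a root of unity in $K$, then $\mathfrak{r}(\operatorname{Im}\delta)=\{0\}$. In all these cases $\operatorname{Im}\delta$ is a Mathieu subspace of $K[x]$.
   Context: $\mathrm{id}$ is the identity map of $K[x]$. For a subset $V$ of $K[x]$, $\mathfrak{r}(V)=\{a\in K[x]\mid a^m\in V\text{ for all } m\gg0\}$. A $K$-subspace $V$ of a commutative $K$-algebra $\mathcal{A}$ is a Mathieu subspace if for all $a,b\in\mathcal{A}$ with $a^m\in V$ for all $m\ge 1$, one has $a^mb\in V$ for all $m\gg 0$. *)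

(* Defs.v *)
From HB Require Import structures.
From mathcomp Require Import all_boot all_order all_algebra.
Set Implicit Arguments. Unset Strict Implicit. Unset Printing Implicit Defensive.
Import Order.TTheory GRing.Theory Num.Theory.
Local Open Scope ring_scope.

Definition qphi (K : fieldType) (q : K) (p : {poly K}) : {poly K} :=
  p \Po (q *: 'X).

Definition qdelta (K : fieldType) (q : K) (p : {poly K}) : {poly K} :=
  p - qphi q p.

Definition Im_delta (K : fieldType) (q : K) (f : {poly K}) : Prop :=
  exists p, f = qdelta q p.

Definition radical (K : fieldType) (V : {poly K} -> Prop) (a : {poly K}) : Prop :=
  exists N : nat, forall m : nat, (N <= m)%N -> V (a ^+ m).

Definition is_subspace (K : fieldType) (A : comAlgType K) (V : A -> Prop) : Prop :=
  [/\ V 0, (forall u v, V u -> V v -> V (u + v)) &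
      (forall (c : K) u, V u -> V (c *: u))].

Definition mathieu_subspace (K : fieldType) (A : comAlgType K) (V : A -> Prop) : Prop :=
  is_subspace V /\
  forall a b : A, (forall m : nat, (1 <= m)%N -> V (a ^+ m)) ->
    exists N : nat, forall m : nat, (N <= m)%N -> V (a ^+ m * b).

(* Main.v *)
Require Import Defs.
From HB Require Import structures.
From mathcomp Require Import all_boot all_order all_algebra.
Import Order.TTheory GRing.Theory Num.Theory.
Local Open Scope ring_scope.
From Stdlib Require Import Classical.

Lemma coef_qphi (K : fieldType) (q : K) p i : (qphi q p)`_i = q^+i * p`_i.
Proof.
rewrite /qphi comp_polyE coef_sum.
under eq_bigr => j _ do rewrite exprZn coefZ coefZ coefXn.
case: (ltnP i (size p)) => [lt|ge].
  rewrite (bigD1 (Ordinal lt)) //= eqxx mulr1 big1 ?addr0; first by rewrite mulrC.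
  move=> j /negbTE; rewrite -val_eqE /= eq_sym => ->; by rewrite mulr0 mulr0.
rewrite nth_default // mulr0 big1 // => j _.
have: (j < i)%N by apply: leq_trans (ltn_ord j) ge.
by rewrite ltn_neqAle eq_sym => /andP[/negbTE -> _]; rewrite !mulr0.
Qed.

Lemma coef_qdelta (K : fieldType) (q : K) p i : (qdelta q p)`_i = (1 - q^+i) * p`_i.
Proof. by rewrite /qdelta coefB coef_qphi mulrBl mul1r. Qed.

Lemma Im_deltaP (K : fieldType) (q : K) f :
  Im_delta q f <-> (forall i, q ^+ i = 1 -> f`_i = 0).
Proof.
split.
  by move=> [p ->] i hi; rewrite coef_qdelta hi subrr mul0r.
move=> H; exists (\poly_(i < size f) (f`_i / (1 - q^+i))).
apply/polyP => i; rewrite coef_qdelta coef_poly.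
case: (ltnP i (size f)) => [_|ge]; last by rewrite mulr0 nth_default.
have [e|ne] := eqVneq (q^+i) 1; first by rewrite H // e subrr mul0r.
by rewrite mulrC divfK // subr_eq0 eq_sym.
Qed.


Lemma rad0 (K : fieldType) (q : K) n (hn : (0 < n)%N) (hq1 : q ^+ n = 1) a :
  radical (Im_delta q) a -> a = 0.
Proof.
move=> [N HN]; apply/eqP; apply/negPn/negP => a0.
set m := (n * N.+1)%N.
have /Im_deltaP H := HN m (leq_trans (leqnSn N) (leq_pmull _ hn)).
have e : q ^+ (size (a ^+ m)).-1 = 1.
  by rewrite size_exp /m mulnC -mulnA exprM hq1 expr1n.
have := H _ e; rewrite -/(lead_coef _) lead_coef_exp => /eqP.
by rewrite expf_eq0 lead_coef_eq0 (negbTE a0) andbF.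
Qed.

Theorem lemma3p3 (K : fieldType) (q : K) (hq : q != 0) :
  [/\ (q = 1 -> forall f : {poly K}, Im_delta q f <-> f = 0),
      ((forall n : nat, (0 < n)%N -> q ^+ n != 1) ->
         forall f : {poly K}, Im_delta q f <-> exists g : {poly K}, f = 'X * g),
      ((exists2 n : nat, (0 < n)%N & q ^+ n = 1) ->
         forall a : {poly K}, radical (Im_delta q) a <-> a = 0)
    & mathieu_subspace (Im_delta q)].
Proof.
have Im0 : Im_delta q 0 by apply/Im_deltaP => i _; rewrite coef0.
split.
- move=> -> f; split; last by move=> ->; apply/Im_deltaP => i _; rewrite coef0.
  move/Im_deltaP => H; apply/polyP => i; rewrite coef0; apply: H; exact: expr1n.
- move=> Hn f; split.
    move/Im_deltaP => H; exists (\poly_(i < size f) f`_i.+1).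
    apply/polyP => i; rewrite coefXM; case: i => [|i] /=; first exact: H.
    rewrite coef_poly; case: ltnP => // ge; rewrite nth_default //; exact: leqW.
  move=> [g ->]; apply/Im_deltaP => i hi; rewrite coefXM.
  case: i hi => [|i] hi //; by move: (Hn i.+1 isT); rewrite hi eqxx.
- move=> [n hn hq1] a; split; first exact: (@rad0 K q n hn hq1 a).
  move=> ->; exists 1%N => m hm; by rewrite expr0n eqn0Ngt hm.
split.
  split => //.
    move=> u v /Im_deltaP hu /Im_deltaP hv; apply/Im_deltaP => i hi.
    by rewrite coefD hu // hv // addr0.
  move=> c u /Im_deltaP hu; apply/Im_deltaP => i hi.
  by rewrite coefZ hu // mulr0.
move=> a b Ha.
case: (classic (exists2 n : nat, (0 < n)%N & q ^+ n = 1)) => [[n hn hq1]|nex].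
  have a0 : a = 0 by apply: (@rad0 K q n hn hq1 a); exists 1%N.
  exists 1%N => m hm; by rewrite a0 expr0n eqn0Ngt hm mul0r.
exists 1%N => m hm; apply/Im_deltaP => i hi.
case: i hi => [|i] hi; last by exfalso; apply: nex; exists i.+1.
by have /Im_deltaP H := Ha m hm; rewrite coef0M H // mul0r.
Qed.
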